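(* Let $X$ be an $X$-set parameter and let $G=G_1\sqcup G_2$ be the disjoint union of graphs $G_1$ and $G_2$. Then $\mathscr{X}^{\rm TAR}(G)\cong\mathscr{X}^{\rm TAR}(G_1)\,\square\,\mathscr{X}^{\rm TAR}(G_2)$, via the correspondence $S\mapsto(S\cap V(G_1),S\cap V(G_2))$.
   Context: All graphs are simple, finite, with nonempty vertex set. An $X$-set parameter is a graph parameter $X(G)$ defined as the minimum cardinality of an $X$-set of $G$, where the $X$-sets of each graph are subsets of its vertex set determined by some property satisfying: (1) supersets (within $V(G)$) of $X$-sets are $X$-sets; (2) the empty set is never an $X$-set; (3) an $X$-set of a disconnected graph is the union of an $X$-set of each component; (4) if $G$ has no isolated vertices, every set of $|V(G)|-1$ vertices is an $X$-set. The $X$-TAR graph $\mathscr{X}^{\rm TAR}(G)$ has as vertices all $X$-sets of $G$, with $S_1,S_2$ adjacent iff $|S_1\ominus S_2|=1$. $\square$ denotes the Cartesian product of graphs: $(a_1,a_2)\sim(b_1,b_2)$ iff ($a_1=b_1$ and $a_2b_2$ is an edge) or ($a_2=b_2$ and $a_1b_1$ is an edge). *)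

(* Defs.v *)
From HB Require Import structures.
From mathcomp Require Import all_boot.
Set Implicit Arguments. Unset Strict Implicit. Unset Printing Implicit Defensive.

Definition is_graph (T : finType) (e : rel T) : Prop :=
  [/\ 0 < #|T|, symmetric e & irreflexive e].

Definition comp_type (T : finType) (e : rel T) (x : T) : finType :=
  {y : T | connect e x y}.

Definition comp_rel (T : finType) (e : rel T) (x : T) : rel (comp_type e x) :=
  fun u v => e (val u) (val v).

Definition comp_set (T : finType) (e : rel T) (x : T) (S : {set T})
  : {set comp_type e x} := [set y | val y \in S].
Arguments comp_set [T] e x S.
Arguments comp_rel [T] e x _ _.

Definition graph_iso (U V : finType) (r : rel U) (s : rel V) (f : U -> V) : Prop :=
  bijective f /\ forall a b, r a b = s (f a) (f b).

(* An X-set parameter: a choice, for every graph, of which vertex subsets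
   are X-sets, satisfying axioms (1)-(4) of the paper, plus invariance
   under graph isomorphism (implicit in "graph parameter"). *)
Record Xparam := {
  Xs : forall T : finType, rel T -> {set T} -> bool;
  X_super : forall (T : finType) (e : rel T), is_graph e ->
    forall S S' : {set T}, S \subset S' -> Xs e S -> Xs e S';
  X_empty : forall (T : finType) (e : rel T), is_graph e -> ~~ Xs e set0;
  X_disconnected : forall (T : finType) (e : rel T), is_graph e ->
    (exists x y, ~~ connect e x y) ->
    forall S : {set T},
      Xs e S <->
        (forall x : T, Xs (comp_rel e x) (comp_set e x S));
  X_cofull : forall (T : finType) (e : rel T), is_graph e ->
    (forall x, exists y, e x y) ->
    forall S : {set T}, #|S| = #|T|.-1 -> Xs e S;
  X_iso : forall (T T' : finType) (e : rel T) (e' : rel T') (f : T -> T'),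
    is_graph e -> is_graph e' -> graph_iso e e' f ->
    forall S : {set T}, Xs e S = Xs e' (f @: S)
}.
Arguments Xs x [T] _ _.

Definition sum_rel (T1 T2 : finType) (e1 : rel T1) (e2 : rel T2) : rel (T1 + T2) :=
  fun u v => match u, v with
             | inl a, inl b => e1 a b
             | inr a, inr b => e2 a b
             | _, _ => false
             end.

Definition TARv (X : Xparam) (T : finType) (e : rel T) : finType :=
  {S : {set T} | Xs X e S}.

Definition TARrel (X : Xparam) (T : finType) (e : rel T) : rel (TARv X e) :=
  fun A B => #|(val A :\: val B) :|: (val B :\: val A)| == 1.

Definition cart_rel (U V : finType) (r : rel U) (s : rel V) : rel (U * V)%type :=
  fun a b => ((a.1 == b.1) && s a.2 b.2) || ((a.2 == b.2) && r a.1 b.1).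
Arguments TARrel X [T] e _ _.
Arguments TARv X [T] e.
Arguments graph_iso [U V] r s f.
Arguments cart_rel [U V] r s _ _.
Arguments sum_rel [T1 T2] e1 e2 _ _.

(* Main.v *)
Require Import Defs.
From mathcomp Require Import all_boot.
Set Implicit Arguments. Unset Strict Implicit. Unset Printing Implicit Defensive.

Lemma connect_inv (T : finType) (e : rel T) (P : T -> Prop) x y :
  (forall a b, P a -> e a b -> P b) -> P x -> connect e x y -> P y.
Proof.
move=> step Px /connectP [p pth ->] {y}.
elim: p x Px pth => [|z p IH] x Px //= /andP [exz pth].
exact: IH (step _ _ Px exz) pth.
Qed.

Lemma comp_is_graph (T : finType) (e : rel T) x : is_graph e -> is_graph (comp_rel e x).
Proof.
case=> _ sy ir; split.
- apply/card_gt0P; by exists (exist _ x (connect0 e x)).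
- by move=> u v; rewrite /comp_rel sy.
- by move=> u; rewrite /comp_rel ir.
Qed.

Lemma Xs_comp (X : Xparam) (T : finType) (e : rel T) (S : {set T}) :
  is_graph e -> (Xs X e S <-> forall x, Xs X (comp_rel e x) (comp_set e x S)).
Proof.
move=> ge.
case: (boolP [exists x, exists y, ~~ connect e x y]) => [/existsP [x /existsP [y nc]]|].
  by apply: (X_disconnected X ge); exists x, y.
rewrite negb_exists => /forallP allc.
have conn : forall x y, connect e x y.
  move=> x y; move: (allc x); rewrite negb_exists => /forallP /(_ y).
  by rewrite negbK.
have key : forall x, Xs X e S = Xs X (comp_rel e x) (comp_set e x S).
  move=> x.
  pose k (y : T) : comp_type e x := exist _ y (conn x y).
  have kb : bijective k by exists val => // z; apply: val_inj.
  rewrite (X_iso X ge (comp_is_graph x ge) (f := k)) //.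
    congr (Xs _ _ _); apply/setP => z; rewrite inE.
    have -> : z = k (val z) by apply: val_inj.
    by rewrite mem_imset //; apply: bij_inj.
split=> [H x|H]; first by rewrite -key.
case: ge => /card_gt0P [x _] _ _; by rewrite (key x).
Qed.

Lemma Xs_embed (X : Xparam) (T U : finType) (eT : rel T) (eU : rel U) (i : T -> U)
  (S : {set U}) (x : T) :
  is_graph eT -> is_graph eU -> injective i ->
  (forall a b, eU (i a) (i b) = eT a b) ->
  (forall a v, eU (i a) v -> exists b, v = i b) ->
  Xs X (comp_rel eU (i x)) (comp_set eU (i x) S) =
  Xs X (comp_rel eT x) (comp_set eT x (i @^-1: S)).
Proof.
move=> gT gU ii hi hc.
have hconn : forall y, connect eT x y -> connect eU (i x) (i y).
  move=> y; apply: (connect_inv (P := fun a => connect eU (i x) (i a))) => //.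
  by move=> a b ca eab; apply: connect_trans ca (connect1 _); rewrite hi.
have hback : forall v, connect eU (i x) v -> exists2 b, v = i b & connect eT x b.
  move=> v; apply: (connect_inv (P := fun a => exists2 b, a = i b & connect eT x b)).
  - move=> a c [b -> cb] ebc; case: (hc _ _ ebc) => d ced; exists d => //.
    by apply: connect_trans cb (connect1 _); rewrite -hi -ced.
  - by exists x.
pose h (y : comp_type eT x) : comp_type eU (i x) := exist _ (i (val y)) (hconn _ (valP y)).
have hinj : injective h.
  by move=> a b /(congr1 val) /= /ii; apply: val_inj.
have hsurj : forall z, exists y, z = h y.
  move=> z; case: (hback _ (valP z)) => b zb cb.
  by exists (exist _ b cb); apply: val_inj.
pose x0 : comp_type eT x := exist _ x (connect0 eT x).
pose g z := if [pick y | h y == z] is Some y then y else x0.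
have hg : cancel g h.
  move=> z; rewrite /g; case: pickP => [y /eqP //|none].
  by case: (hsurj z) => y zy; move: (none y); rewrite zy eqxx.
have gh : cancel h g by move=> y; apply: hinj; rewrite hg.
rewrite (X_iso X (comp_is_graph x gT) (comp_is_graph (i x) gU) (f := h)).
  congr (Xs _ _ _); apply/setP => z; rewrite -(hg z) mem_imset // !inE.
  done.
split; first by exists g.
by move=> a b; rewrite /comp_rel /= hi.
Qed.

Lemma sum_is_graph (T1 T2 : finType) (e1 : rel T1) (e2 : rel T2) :
  is_graph e1 -> is_graph e2 -> is_graph (sum_rel e1 e2).
Proof.
case=> /card_gt0P [a _] s1 i1 [_ s2 i2]; split.
- by apply/card_gt0P; exists (inl a).
- by case=> u [] v //=; rewrite /= ?s1 ?s2.
- by case=> u /=; rewrite ?i1 ?i2.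
Qed.

Lemma Xs_sum (X : Xparam) (T1 T2 : finType) (e1 : rel T1) (e2 : rel T2) S :
  is_graph e1 -> is_graph e2 ->
  Xs X (sum_rel e1 e2) S <-> Xs X e1 (inl @^-1: S) /\ Xs X e2 (inr @^-1: S).
Proof.
move=> g1 g2; have gs := sum_is_graph g1 g2.
have E1 : forall x, Xs X (comp_rel (sum_rel e1 e2) (inl x)) (comp_set (sum_rel e1 e2) (inl x) S)
   = Xs X (comp_rel e1 x) (comp_set e1 x (inl @^-1: S)).
  move=> x; apply: Xs_embed => //; first by move=> a b [].
  by move=> a [b|b] //= _; exists b.
have E2 : forall x, Xs X (comp_rel (sum_rel e1 e2) (inr x)) (comp_set (sum_rel e1 e2) (inr x) S)
   = Xs X (comp_rel e2 x) (comp_set e2 x (inr @^-1: S)).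
  move=> x; apply: Xs_embed => //; first by move=> a b [].
  by move=> a [b|b] //= _; exists b.
split=> [/(Xs_comp X S gs) H|[/(Xs_comp X _ g1) H1 /(Xs_comp X _ g2) H2]].
  by split; apply/(Xs_comp X _ _) => // x; [rewrite -E1 | rewrite -E2].
by apply/(Xs_comp X S gs) => -[x|x]; [rewrite E1 | rewrite E2].
Qed.

Definition symd (T : finType) (A B : {set T}) := (A :\: B) :|: (B :\: A).

Lemma eq_symd (T : finType) (A B : {set T}) : (A == B) = (#|symd A B| == 0).
Proof. by rewrite cards_eq0 setU_eq0 !setD_eq0 eqEsubset. Qed.

Lemma card_symd_sum (T1 T2 : finType) (A B : {set T1 + T2}) :
  #|symd A B| = #|symd (inl @^-1: A) (inl @^-1: B)| + #|symd (inr @^-1: A) (inr @^-1: B)|.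
Proof.
have il : injective (@inl T1 T2) by move=> ? ? [].
have ir : injective (@inr T1 T2) by move=> ? ? [].
have -> : symd A B = inl @: symd (inl @^-1: A) (inl @^-1: B) :|: inr @: symd (inr @^-1: A) (inr @^-1: B).
  apply/setP => -[z|z]; rewrite !inE.
    rewrite mem_imset //; case: (boolP (inl z \in inr @: _)) => [/imsetP [? _ //]|_].
    by rewrite !inE orbF.
  rewrite mem_imset //; case: (boolP (inr z \in inl @: _)) => [/imsetP [? _ //]|_].
  by rewrite !inE.
rewrite cardsU !card_imset //.
have -> : inl @: symd (inl @^-1: A) (inl @^-1: B) :&: inr @: symd (inr @^-1: A) (inr @^-1: B) = set0.
  apply/setP => z; rewrite !inE; apply/negP => /andP [/imsetP [a _ ->] /imsetP [? _ //]].
by rewrite cards0 subn0.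
Qed.

Theorem proposition2p33 (X : Xparam) (T1 T2 : finType)
  (e1 : rel T1) (e2 : rel T2) :
  is_graph e1 -> is_graph e2 ->
  exists f : TARv X (sum_rel e1 e2) -> (TARv X e1 * TARv X e2)%type,
    graph_iso (TARrel X (sum_rel e1 e2))
              (cart_rel (TARrel X e1) (TARrel X e2)) f /\
    (forall S, val (f S).1 = inl @^-1: val S /\ val (f S).2 = inr @^-1: val S).
Proof.
move=> g1 g2.
have P1 : forall S : TARv X (sum_rel e1 e2), Xs X e1 (inl @^-1: val S).
  by move=> S; case: ((Xs_sum X (val S) g1 g2).1 (valP S)).
have P2 : forall S : TARv X (sum_rel e1 e2), Xs X e2 (inr @^-1: val S).
  by move=> S; case: ((Xs_sum X (val S) g1 g2).1 (valP S)).
pose f (S : TARv X (sum_rel e1 e2)) : (TARv X e1 * TARv X e2)%type :=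
  (exist (fun A => Xs X e1 A) _ (P1 S), exist (fun A => Xs X e2 A) _ (P2 S)).
have il : injective (@inl T1 T2) by move=> ? ? [].
have ir : injective (@inr T1 T2) by move=> ? ? [].
have pl : forall (A : {set T1}) (B : {set T2}), inl @^-1: (inl @: A :|: inr @: B) = A.
  move=> A B; apply/setP => z; rewrite !inE mem_imset //.
  by case: (boolP (inl z \in inr @: B)) => [/imsetP [? _ //]|_]; rewrite orbF.
have pr : forall (A : {set T1}) (B : {set T2}), inr @^-1: (inl @: A :|: inr @: B) = B.
  move=> A B; apply/setP => z; rewrite !inE mem_imset //.
  by case: (boolP (inr z \in inl @: A)) => [/imsetP [? _ //]|_].
have Q : forall (p : (TARv X e1 * TARv X e2)%type),
    Xs X (sum_rel e1 e2) (inl @: val p.1 :|: inr @: val p.2).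
  move=> [A B]; apply/(Xs_sum X _ g1 g2); rewrite pl pr.
  by split; [exact: valP A | exact: valP B].
pose g p : TARv X (sum_rel e1 e2) := exist (fun A => Xs X (sum_rel e1 e2) A) _ (Q p).
exists f; split; last by [].
split.
  exists g.
    move=> S; apply: val_inj => /=; apply/setP => -[z|z]; rewrite !inE.
      rewrite mem_imset //; case: (boolP (inl z \in inr @: _)) => [/imsetP [? _ //]|_].
      by rewrite !inE orbF.
    rewrite mem_imset //; case: (boolP (inr z \in inl @: _)) => [/imsetP [? _ //]|_].
    by rewrite !inE.
  move=> [A B]; congr pair; apply: val_inj => /=; [exact: pl | exact: pr].
move=> S S'.
rewrite /TARrel /cart_rel /=.
have -> : forall (T : finType) (e : rel T) (A B : TARv X e), (A == B) = (val A == val B).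
  by [].
rewrite /= !eq_symd -/(symd (val S) (val S')) card_symd_sum /symd.
rewrite [exist (fun A => Xs X e2 A) _ (P2 S) == _](_ : _ = (inr @^-1: val S == inr @^-1: val S')) //.
rewrite eq_symd.
set a := #|_ :|: _|; set b := #|_ :|: _|; clearbody a b.
by case: a => [|[|a]]; case: b => [|[|b]]; rewrite ?addnS ?addSn.
Qed.
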